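(* Let $\mathcal G=(\mathcal V,\mathcal E,W)$ be a network, $h\in\mathbb{R}^{\mathcal V}$, and consider the SNC game with binary actions on $\mathcal G$ with external field $h$. Then: (i) the game is super-modular if and only if $\mathcal G$ is unsigned; (ii) if $\mathcal G$ is unsigned, then the set $\mathcal N$ of Nash equilibria is globally BR-reachable.
   Context: A network is a triple $\mathcal G=(\mathcal V,\mathcal E,W)$ where $\mathcal V$ is a finite nonempty set, $\mathcal E\subseteq\mathcal V\times\mathcal V$, and $W\in\mathbb{R}^{\mathcal V\times\mathcal V}$ has zero diagonal and satisfies $W_{ij}\neq0$ iff $(i,j)\in\mathcal E$ (weights may have either sign). It is unsigned if $W_{ij}\ge0$ for all $i,j$. The SNC game with binary actions on $\mathcal G$ with external field $h\in\mathbb{R}^{\mathcal V}$ has player set $\mathcal V$, action set $\{-1,+1\}$ for each player, strategy profiles $\mathcal X=\{\pm1\}^{\mathcal V}$, and utilities $u_i(x)=h_ix_i+x_i\sum_{j\in\mathcal V}W_{ij}x_j$. A game with binary actions $\{\pm1\}$ is super-modular if $u_i(+1,x_{-i})-u_i(-1,x_{-i})\le u_i(+1,y_{-i})-u_i(-1,y_{-i})$ for every player $i$ and all profiles $x\le y$ (entrywise). Best responses $\mathcal B_i(x_{-i})=\arg\max_{x_i\in\{\pm1\}}u_i(x_i,x_{-i})$; Nash equilibrium: $x^*_i\in\mathcal B_i(x^*_{-i})$ for all $i$. A BR-path of length $l\ge0$ from $x$ to $y$ is a sequence $x^{(0)}=x,\dots,x^{(l)}=y$ such that for each $k$ some player $i_k$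 has $x^{(k)}_{-i_k}=x^{(k-1)}_{-i_k}$ and $x^{(k)}_{i_k}\in\mathcal B_{i_k}(x^{(k-1)}_{-i_k})\setminus\{x^{(k-1)}_{i_k}\}$. A set $\mathcal X^*\subseteq\mathcal X$ is globally BR-reachable if from every profile there is a BR-path to some element of $\mathcal X^*$. *)

(* Defs.v *)
From HB Require Import structures.
From mathcomp Require Import all_boot all_order all_algebra.
Set Implicit Arguments. Unset Strict Implicit. Unset Printing Implicit Defensive.
Import Order.TTheory GRing.Theory Num.Theory.
Local Open Scope ring_scope.

Section SNC.
Variables (R : realFieldType) (V : finType).

(* Binary action: true encodes +1, false encodes -1. *)
Definition act (b : bool) : R := if b then 1 else -1.

Definition profile := {ffun V -> bool}.

Definition upd (x : profile) (i : V) (a : bool) : profile :=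
  [ffun j => if j == i then a else x j].

(* Entrywise order on profiles (-1 < +1, i.e. false < true). *)
Definition prof_le (x y : profile) : Prop := forall j, x j ==> y j.

Variables (W : V -> V -> R) (h : V -> R).

Definition utility (i : V) (x : profile) : R :=
  h i * act (x i) + act (x i) * \sum_(j : V) W i j * act (x j).

Definition supermodular : Prop :=
  forall (i : V) (x y : profile), prof_le x y ->
    utility i (upd x i true) - utility i (upd x i false)
    <= utility i (upd y i true) - utility i (upd y i false).

Definition best_response (i : V) (x : profile) (a : bool) : Prop :=
  forall b : bool, utility i (upd x i b) <= utility i (upd x i a).

Definition nash (x : profile) : Prop :=
  forall i, best_response i x (x i).

Definition br_step (x y : profile) : Prop :=
  exists i : V, (forall j, j != i -> y j = x j) /\
                best_response i x (y i) /\ y i != x i.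

Definition br_path (x y : profile) : Prop :=
  exists (l : nat) (s : nat -> profile),
    s 0%N = x /\ s l = y /\
    forall k : nat, (0 < k <= l)%N -> br_step (s k.-1) (s k).

Definition globally_br_reachable (S : profile -> Prop) : Prop :=
  forall x : profile, exists y : profile, S y /\ br_path x y.

End SNC.

Definition unsigned (R : realFieldType) (V : finType) (W : V -> V -> R) : Prop :=
  forall i j, 0 <= W i j.
Arguments globally_br_reachable [R V] W h S.
Arguments br_path [R V] W h x y.

(* Main.v *)
Require Import Defs.
From HB Require Import structures.
From mathcomp Require Import all_boot all_order all_algebra.
From mathcomp Require Import lra zify.
Import Order.TTheory GRing.Theory Num.Theory.
Local Open Scope ring_scope.

Section Aux.
Variables (R : realFieldType) (V : finType) (W : V -> V -> R) (h : V -> R).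
Hypothesis Wdiag : forall i : V, W i i = 0.

Definition Dv (i : V) (x : profile V) : R := h i + \sum_(j : V) W i j * act R (x j).

Lemma utilE i x a : utility W h i (upd x i a) = act R a * Dv i x.
Proof.
rewrite /utility /Dv ffunE eqxx.
have -> : \sum_(j : V) W i j * act R (upd x i a j) = \sum_(j : V) W i j * act R (x j).
  apply: eq_bigr => j _; rewrite ffunE; case: eqP => [->|//].
  by rewrite Wdiag !mul0r.
by rewrite mulrDr mulrC.
Qed.

Definition brb i x (a : bool) : bool := if a then 0 <= Dv i x else Dv i x <= 0.

Lemma brP i x a : best_response W h i x a <-> brb i x a.
Proof.
rewrite /best_response /brb; split.
  case: a => H; [have := H false | have := H true]; rewrite !utilE /act; lra.
move=> H b; rewrite !utilE; case: a H; case: b => /=; rewrite /act; lra.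
Qed.

Lemma Dv_upd_self i x a : Dv i (upd x i a) = Dv i x.
Proof.
rewrite /Dv; congr (_ + _); apply: eq_bigr => j _; rewrite ffunE.
by case: eqP => [->|//]; rewrite Wdiag !mul0r.
Qed.

Lemma Dv_mono i x y : unsigned W -> prof_le x y -> Dv i x <= Dv i y.
Proof.
move=> HW Hle; rewrite /Dv lerD2l; apply: ler_sum => j _.
apply: ler_wpM2l; first exact: HW.
have := Hle j; case: (x j); case: (y j) => //= _; rewrite /act; lra.
Qed.

Lemma step_path x y z : br_step W h x y -> br_path W h y z -> br_path W h x z.
Proof.
move=> Hs [l [s [s0 [sl Hk]]]].
exists l.+1, (fun k => if k is k'.+1 then s k' else x); split => //; split => //.
move=> [|k] // /andP [_ Hkl].
case: k Hkl => [|k] Hkl /=; first by rewrite s0.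
by apply: (Hk k.+1); rewrite /= -ltnS Hkl.
Qed.

Lemma path_refl x : br_path W h x x.
Proof. by exists 0%N, (fun _ => x); split => //; split => //; move=> [|k]. Qed.

Lemma flip_step (x : profile V) (i : V) (a : bool) : a != x i -> brb i x a -> br_step W h x (upd x i a).
Proof.
move=> Ha Hb; exists i; split.
  by move=> j /negPf Hj; rewrite ffunE Hj.
by rewrite ffunE eqxx; split => //; apply/brP.
Qed.

Hypothesis HW : unsigned W.

Definition inv2 (x : profile V) := forall i, x i = false -> brb i x false.

Lemma phase2 n (x : profile V) : (#|[set j | x j]| <= n)%N -> inv2 x ->
  exists z, nash W h z /\ br_path W h x z.
Proof.
elim: n x => [|n IH] x Hc Hinv.
- exists x; split; last exact: path_refl.
  move=> i; apply/brP; case Hx: (x i); last exact: Hinv.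
  have : i \in [set j | x j] by rewrite inE.
  by rewrite leqn0 in Hc; move/eqP: Hc => /cards0_eq ->; rewrite inE.
- case: (pickP (fun i => x i && ~~ brb i x true)) => [i /andP [Hxi Hnb]|Hnone]; last first.
    exists x; split; last exact: path_refl.
    move=> i; apply/brP; case Hx: (x i); last exact: Hinv.
    by have := Hnone i; rewrite Hx /= => /negbFE.
  have Hbf : brb i x false by move: Hnb; rewrite /brb; lra.
  have H1 : (#|[set j | upd x i false j]| <= n)%N.
    rewrite -ltnS; apply: leq_trans Hc; apply: proper_card; apply/properP; split.
      by apply/subsetP => j; rewrite !inE ffunE; case: eqP => // _.
    by exists i; rewrite !inE ?ffunE ?eqxx.
  have H2 : inv2 (upd x i false).
    move=> j; rewrite ffunE; case: eqP => [->|Hji] Hj.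
      by move: Hbf; rewrite /brb Dv_upd_self.
    have := Hinv j Hj; rewrite /brb => H; apply: le_trans H.
    apply: Dv_mono => // k; rewrite ffunE; by case: eqP => // _; case: (x k).
  have [z [Hz Hp]] := IH (upd x i false) H1 H2.
  exists z; split => //; apply: step_path Hp; apply: flip_step => //.
  by rewrite Hxi.
Qed.

Lemma phase1 n (x : profile V) : (#|[set j | ~~ x j]| <= n)%N -> exists z, nash W h z /\ br_path W h x z.
Proof.
elim: n x => [|n IH] x Hc.
- apply: (@phase2 #|[set j | x j]| x) => // i Hi.
  have : i \in [set j | ~~ x j] by rewrite inE Hi.
  by rewrite leqn0 in Hc; move/eqP: Hc => /cards0_eq ->; rewrite inE.
- case: (pickP (fun i => ~~ x i && ~~ brb i x false)) => [i /andP [Hxi Hnb]|Hnone]; last first.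
    apply: (@phase2 #|[set j | x j]| x) => // i Hi.
    by have := Hnone i; rewrite Hi /= => /negbFE.
  have Hbt : brb i x true by move: Hnb; rewrite /brb; lra.
  have H1 : (#|[set j | ~~ upd x i true j]| <= n)%N.
    rewrite -ltnS; apply: leq_trans Hc; apply: proper_card; apply/properP; split.
      by apply/subsetP => j; rewrite !inE ffunE; case: eqP => // _.
    by exists i; rewrite !inE ?ffunE ?eqxx.
  have [z [Hz Hp]] := IH (upd x i true) H1.
  exists z; split => //; apply: step_path Hp; apply: flip_step => //.
Qed.

End Aux.

Theorem proposition2 (R : realFieldType) (V : finType) (W : V -> V -> R) (h : V -> R)
  (HV : (0 < #|V|)%N) (Wdiag : forall i : V, W i i = 0) :
  (supermodular W h <-> unsigned W) /\
  (unsigned W -> globally_br_reachable W h (nash W h)).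
Proof.
split; last first.
  by move=> HW x; have [z [? ?]] := @phase1 _ _ W h Wdiag HW _ x (leqnn _); exists z.
split.
- move=> Hs i j; case: (eqVneq j i) => [->|Hji]; first by rewrite Wdiag.
  pose x : profile V := [ffun => false].
  pose y := upd x j true.
  have Hle : prof_le x y by move=> k; rewrite ffunE.
  have := Hs i x y Hle; rewrite !(@utilE _ _ W h Wdiag) /act.
  have -> : @Dv _ _ W h i y = @Dv _ _ W h i x + W i j *+ 2.
    rewrite /Dv -addrA; congr (_ + _).
    rewrite (bigD1 j) //= [in RHS](bigD1 j) //= !ffunE eqxx.
    have -> : \sum_(k | k != j) W i k * act R (y k) = \sum_(k | k != j) W i k * act R (x k).
      by apply: eq_bigr => k Hk; rewrite /y ffunE (negPf Hk).
    rewrite /act; lra.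
  move=> H; lra.
- move=> HW i x y Hle; rewrite !(@utilE _ _ W h Wdiag) /act.
  have := @Dv_mono _ _ W h i x y HW Hle; lra.
Qed.
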